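(* Let $X$ be a nontrivial mm-space and $p\in[1,\infty)$. Then for any $r>0$, $$\lim_{n\to\infty}\sup_{x\in X^n}\mu_X^{\otimes n}\big(U_r^{X_p^n}(x)\big)=0.$$
   Context: An mm-space is a triple $(X,d_X,\mu_X)$ with $(X,d_X)$ complete separable metric and $\mu_X$ a Borel probability measure, with $X=\operatorname{supp}\mu_X$ assumed; it is nontrivial if it is not mm-isomorphic to the one-point space (equivalently, its support has more than one point). $X_p^n$ denotes $X^n$ with metric $d(x,x')=(\sum_{i=1}^nd_X(x_i,x_i')^p)^{1/p}$ and measure $\mu_X^{\otimes n}$; $U_r^{X_p^n}(x)$ is the open ball of radius $r$ about $x$ in this metric. *)

(* Defs.v *)
From HB Require Import structures.
From mathcomp Require Import all_boot all_order all_algebra.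
From mathcomp Require Import all_classical all_reals all_analysis.
Set Implicit Arguments. Unset Strict Implicit. Unset Printing Implicit Defensive.
Import Order.TTheory GRing.Theory Num.Theory.
Local Open Scope classical_set_scope.
Local Open Scope ring_scope.

Section mm.
Context {R : realType} {T : Type}.
Variable dist : T -> T -> R.

Definition is_metric : Prop :=
  [/\ forall x y, 0 <= dist x y,
      forall x y, dist x y = 0 <-> x = y,
      forall x y, dist x y = dist y x
    & forall x y z, dist x z <= dist x y + dist y z].

Definition dball (x : T) (r : R) : set T := [set y | dist x y < r].

Definition dopen (U : set T) : Prop :=
  forall x, U x -> exists2 e : R, 0 < e & dball x e `<=` U.

Definition dcomplete : Prop :=
  forall u : nat -> T,
    (forall e : R, 0 < e -> exists N, forall m n, (N <= m)%N -> (N <= n)%N ->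
       dist (u m) (u n) < e) ->
    exists l : T, forall e : R, 0 < e -> exists N, forall n, (N <= n)%N ->
       dist (u n) l < e.

Definition dseparable : Prop :=
  exists D : set T, countable D /\
    forall U, dopen U -> U !=set0 -> U `&` D !=set0.
End mm.

Definition support {R : realType} {d} {T : measurableType d}
  (dist : T -> T -> R) (mu : set T -> \bar R) : set T :=
  [set x | forall U, dopen dist U -> U x -> (0 < mu U)%E].

Definition mm_space {R : realType} {d} (T : measurableType d)
  (dist : T -> T -> R) (mu : probability T R) : Prop :=
  [/\ is_metric dist, dcomplete dist, dseparable dist,
      (@measurable d T) = <<s dopen dist >>
    & support dist mu = setT].

Definition nontrivial_mm {R : realType} {d} (T : measurableType d)
  (dist : T -> T -> R) (mu : probability T R) : Prop :=
  exists x y, support dist mu x /\ support dist mu y /\ x <> y.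

Definition lp_dist {R : realType} {T : Type} (dist : T -> T -> R) (p : R)
  (n : nat) (x y : n.-tuple T) : R :=
  (\sum_(i < n) (dist (tnth x i) (tnth y i)) `^ p) `^ p^-1.

(* P is the product measure mu^{(x) n} on n.-tuple T (with the product
   sigma-algebra generated by the coordinates): it agrees with the product
   of mu on measurable rectangles (which determines it uniquely). *)
Definition is_product_measure {R : realType} {d} {T : measurableType d}
  (mu : probability T R) (n : nat) (P : probability (n.-tuple T) R) : Prop :=
  forall A : 'I_n -> set T, (forall i, measurable (A i)) ->
    P [set x | forall i, A i (tnth x i)] = (\prod_(i < n) mu (A i))%E.

(* Main.v *)
Require Import Defs.
From HB Require Import structures.
From mathcomp Require Import all_boot all_order all_algebra.
From mathcomp Require Import all_classical all_reals all_analysis.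
From mathcomp Require Import lra ring.
Import Order.TTheory GRing.Theory Num.Theory.
Local Open Scope classical_set_scope.
Local Open Scope ring_scope.
Lemma dball_open (R : realType) (T : Type) (dist : T -> T -> R) x e :
  is_metric dist -> dopen dist (dball dist x e).
Proof.
move=> [h0 h1 hs ht] y; rewrite /dball /= => yB.
exists (e - dist x y); first by rewrite subr_gt0.
move=> z /= hz; have := ht x y z; lra.
Qed.

Arguments dball_open {R T dist} x e.

Lemma meas_dball (R : realType) d (T : measurableType d) (dist : T -> T -> R) x e :
  is_metric dist -> (@measurable d T) = <<s dopen dist >> ->
  measurable (dball dist x e).
Proof.
move=> hmet hm; rewrite hm; apply: sub_gen_smallest; exact: dball_open.
Qed.

Arguments meas_dball {R d T dist} x e.

Lemma meas_dist (R : realType) d (T : measurableType d) (dist : T -> T -> R) x :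
  is_metric dist -> (@measurable d T) = <<s dopen dist >> ->
  measurable_fun setT (dist x).
Proof.
move=> hmet hm.
apply: (measurability _ (measurable_realfun.RGenInftyO.measurableE R)).
move=> _ [_ [c ->] <-].
have -> : setT `&` dist x @^-1` `]-oo, c[ = dball dist x c.
  apply/seteqP; split => y /=.
    by move=> [_]; rewrite in_itv /=.
  by move=> h; split => //; rewrite in_itv /=.
exact: meas_dball.
Qed.

Arguments meas_dist {R d T dist} x.

Lemma meas_lpball (R : realType) d (T : measurableType d) (dist : T -> T -> R)
  (p : R) n (x : n.-tuple T) r :
  is_metric dist -> (@measurable d T) = <<s dopen dist >> ->
  measurable (dball (lp_dist dist p (n := n)) x r).
Proof.
move=> hmet hm.
have mf : measurable_fun setT (fun y : n.-tuple T => lp_dist dist p x y).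
  rewrite /lp_dist.
  apply: (measurableT_comp (measurable_realfun.measurable_powR _)).
  apply: measurable_sum => i.
  apply: (measurableT_comp (measurable_realfun.measurable_powR _)).
  apply: (@measurableT_comp _ _ _ _ T _ (dist (tnth x i)) setT (fun y => tnth y i)); [exact: meas_dist|exact: measurable_tnth].
have := mf measurableT _ (measurable_itv `]-oo, r[).
congr measurable; apply/seteqP; split => y /=.
  by move=> [_]; rewrite in_itv /=.
by move=> h; split => //; rewrite in_itv /=.
Qed.

Lemma fine_disj_le1 (R : realType) d (T : measurableType d) (mu : probability T R)
  (A B : set T) : measurable A -> measurable B -> A `&` B = set0 ->
  fine (mu A) + fine (mu B) <= 1.
Proof.
move=> mA mB AB.
have h := measureU mu mA mB AB.
have := probability_le1 mu (measurableU _ _ mA mB).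
rewrite h -(fineK (fin_num_measure mu A mA)) -(fineK (fin_num_measure mu B mB)).
by rewrite -EFinD lee_fin.
Qed.

Arguments fine_disj_le1 {R d T} mu {A B}.

Lemma unif_small (R : realType) d (T : measurableType d) (dist : T -> T -> R)
  (mu : probability T R) :
  is_metric dist -> (@measurable d T) = <<s dopen dist >> ->
  nontrivial_mm dist mu ->
  exists eps m : R, [/\ 0 < eps, 0 < m &
    forall x0, fine (mu (dball dist x0 eps)) <= 1 - m].
Proof.
move=> hmet hm [a [b [sa [sb ab]]]].
have [h0 h1 hs ht] := hmet.
have dpos : 0 < dist a b.
  rewrite lt_neqAle h0 andbT eq_sym; apply/eqP => /h1; exact: ab.
set eps := dist a b / 4.
have epos : 0 < eps by rewrite /eps divr_gt0.
have self z : dball dist z eps z.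
  by rewrite /dball /=; have -> : dist z z = 0 by apply/h1.
have fpos z : Defs.support dist mu z -> 0 < fine (mu (dball dist z eps)).
  move=> sz; have := sz _ (dball_open z eps hmet) (self z).
  by rewrite -(fineK (fin_num_measure mu _ (meas_dball z eps hmet hm))) lte_fin.
set m := Num.min (fine (mu (dball dist a eps))) (fine (mu (dball dist b eps))).
exists eps, m; split => //.
  by rewrite lt_min !fpos.
move=> x0.
have mB z := meas_dball z eps hmet hm.
have [[y [y0 ya]]|nex] := pselect (exists y, dball dist x0 eps y /\ dball dist a eps y).
  have disj : dball dist x0 eps `&` dball dist b eps = set0.
    apply/seteqP; split => // z [z0 zb]; exfalso.
    move: y0 ya z0 zb; rewrite /dball /= => y0 ya z0 zb.
    have t1 := ht a y b; have t2 := ht y x0 b; have t3 := ht x0 z b.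
    have := hs y x0; have := hs z b.
    rewrite /eps in y0 ya z0 zb; lra.
  have := fine_disj_le1 mu (mB x0) (mB b) disj.
  have : m <= fine (mu (dball dist b eps)) by rewrite /m ge_min lexx orbT.
  lra.
have disj : dball dist x0 eps `&` dball dist a eps = set0.
  apply/seteqP; split => // z [z0 za]; exfalso; apply: nex; by exists z.
have := fine_disj_le1 mu (mB x0) (mB a) disj.
have : m <= fine (mu (dball dist a eps)) by rewrite /m ge_min lexx.
lra.
Qed.

Lemma rect_meas d (T : measurableType d) n (A : 'I_n -> set T) :
  (forall i, measurable (A i)) ->
  measurable [set y : n.-tuple T | forall i, A i (tnth y i)].
Proof.
move=> mA.
have -> : [set y : n.-tuple T | forall i, A i (tnth y i)] =
    \big[setI/setT]_(i <- enum 'I_n) ((fun y : n.-tuple T => tnth y i) @^-1` A i).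
  apply/seteqP; split => y.
    move=> /= h; elim: (enum 'I_n) => [|i s IH]; rewrite ?big_nil ?big_cons //.
    by split => //; exact: h.
  move=> h i; have : i \in enum 'I_n by rewrite mem_enum.
  elim: (enum 'I_n) h => [|j s IH]; rewrite ?big_nil ?big_cons // => - [hj hs].
  by rewrite in_cons => /orP [/eqP ->|]; [exact: hj|exact: IH].
apply: bigsetI_measurable => i _.
by have := measurable_tnth i measurableT (mA i); rewrite setTI.
Qed.

Lemma far_card (R : realType) (T : Type) (dist : T -> T -> R) (p : R) n
  (x y : n.-tuple T) (r eps : R) (K : nat) :
  is_metric dist -> 1 <= p -> 0 < eps -> r `^ p < K%:R * eps `^ p ->
  lp_dist dist p x y < r ->
  (#|finset (fun i : 'I_n => (eps <= dist (tnth x i) (tnth y i))%R)| < K)%N.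
Proof.
move=> [h0 _ _ _] p1 epos rK.
rewrite /lp_dist.
set s := \sum_(i < n) _.
move=> sr.
have p0 : 0 < p by lra.
have s0 : 0 <= s by apply: sumr_ge0 => i _; exact: powR_ge0.
have sr' : s < r `^ p.
  have -> : s = (s `^ p^-1) `^ p.
    by rewrite -powRrM mulVf ?powRr1 // gt_eqF.
  apply: gt0_ltr_powR => //; rewrite nnegrE ?powR_ge0 //.
  by apply: ltW; apply: le_lt_trans sr; exact: powR_ge0.
set F := [set i | _]%SET.
have Fs : #|F|%:R * eps `^ p <= s.
  rewrite /s (bigID (mem F)) /=.
  rewrite -[leLHS]addr0; apply: lerD; last by apply: sumr_ge0 => i _; exact: powR_ge0.
  rewrite mulr_natl -sumr_const; apply: ler_sum => i; rewrite inE => iF.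
  by apply: ge0_ler_powR; rewrite ?nnegrE ?(ltW epos) ?h0 //; lra.
have : #|F|%:R * eps `^ p < K%:R * eps `^ p by apply: le_lt_trans Fs _; lra.
by rewrite ltr_pM2r ?powR_gt0 // ltr_nat.
Qed.
Arguments far_card {R T dist p n x y r eps K}.

Lemma ball_bound (R : realType) d (T : measurableType d) (dist : T -> T -> R)
  (mu : probability T R) n (Pn : probability (n.-tuple T) R) (p r eps m : R)
  (K : nat) (x : n.-tuple T) :
  is_metric dist -> (@measurable d T) = <<s dopen dist >> -> 1 <= p ->
  0 < eps -> 0 < m -> m <= 1 ->
  (forall x0, fine (mu (dball dist x0 eps)) <= 1 - m) ->
  r `^ p < K%:R * eps `^ p ->
  is_product_measure mu Pn ->
  (Pn (dball (lp_dist dist p (n:=n)) x r) <=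
     ((n.+1)%:R ^+ K * expR (- m * (n%:R - K%:R)))%:E)%E.
Proof.
move=> hmet hm p1 epos mpos m1 hq hK hP.
have [h0 h1 hs ht] := hmet.
pose I := {ffun 'I_K -> option 'I_n}.
pose G (t : I) (i : 'I_n) := [exists j, t j == Some i].
pose A (t : I) (i : 'I_n) := if G t i then setT else dball dist (tnth x i) eps.
pose Rect (t : I) := [set y : n.-tuple T | forall i, A t i (tnth y i)].
have mA t i : measurable (A t i).
  by rewrite /A; case: ifP => _; [exact: measurableT|exact: meas_dball].
have mRect t : measurable (Rect t) := @rect_meas _ _ _ _ (mA t).
pose t0 : I := [ffun => None].
pose N := #|I|.
pose F k := Rect (nth t0 (enum I) k).
set c := expR (- m * (n%:R - K%:R)).
have hRect t : (Pn (Rect t) <= c%:E)%E.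
  rewrite /Rect hP //.
  have -> : (\prod_(i < n) mu (A t i) = \prod_(i < n) (fine (mu (A t i)))%:E)%E.
    by apply: eq_bigr => i _; rewrite fineK // fin_num_measure.
  rewrite prodEFin lee_fin.
  apply: (@le_trans _ _ (\prod_(i < n) (if G t i then 1 else 1 - m))).
    apply: ler_prod => i _; rewrite fine_ge0 ?measure_ge0 //=.
    rewrite /A; case: ifP => _; last exact: hq.
    by rewrite probability_setT.
  rewrite (bigID (G t)) /= big1 ?mul1r; last by move=> i ->.
  rewrite (eq_bigr (fun=> 1 - m)); last by move=> i /negbTE ->.
  rewrite prodr_const.
  set cc := #|_|.
  have GK : (#|[set i | G t i]%SET| <= K)%N.
    rewrite -(card_imset _ (@Some_inj _)).
    apply: (@leq_trans #|[set t j | j in 'I_K]%SET|).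
      apply: subset_leq_card; apply/fintype.subsetP => _ /imsetP [i iG ->]; rewrite inE in iG.
      by move/fintype.existsP: iG => [j /eqP tj]; apply/imsetP; exists j.
    by apply: (leq_trans (leq_imset_card _ _)); rewrite card_ord.
  have cG : (n <= K + cc)%N.
    have := cardC [set i | G t i]%SET.
    rewrite card_ord => <-.
    apply: leq_add => //; apply/eq_leq/eq_card => i.
    by rewrite !inE.
  apply: (@le_trans _ _ (expR (-m) ^+ cc)).
    apply: lerXn2r; rewrite ?nnegrE ?expR_ge0 //; first lra.
    have := expR_ge1Dx (-m); lra.
  rewrite -expRM_natl ler_expR.
  have : (n%:R <= K%:R + cc%:R :> R) by rewrite -natrD ler_nat.
  nra.
have cover : dball (lp_dist dist p (n:=n)) x r `<=` \big[setU/set0]_(k < N) F k.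
  move=> y yB.
  have hF := far_card hmet p1 epos hK yB.
  set Fs := [set i | _]%SET in hF.
  pose t : I := [ffun j : 'I_K => nth None (map Some (enum Fs)) j].
  have yt : Rect t y.
    move=> i; rewrite /A; case: ifP => // Gn.
    rewrite /dball /=; rewrite ltNge; apply/negP => le.
    suff : G t i by rewrite Gn.
    rewrite /G; apply/existsP.
    have iF : i \in Fs by rewrite inE.
    have hj : (index i (enum Fs) < K)%N.
      by apply: (ltn_trans _ hF); rewrite cardE index_mem mem_enum.
    exists (Ordinal hj); rewrite ffunE /= (nth_map i) ?nth_index ?mem_enum //.
    by rewrite index_mem mem_enum.
  rewrite -bigcup_mkord; exists (index t (enum I)).
    by rewrite /= /N cardE index_mem mem_enum.
  by rewrite /F nth_index ?mem_enum.
have sub := @content_subadditive _ _ _ Pn _ F N (fun k _ => mRect _) (@meas_lpball _ _ _ dist p n x r hmet hm) cover.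
apply: (le_trans sub).
apply: (@le_trans _ _ (\sum_(k < N) c%:E)%E); first by apply: lee_sum => k _; exact: hRect.
rewrite sumEFin lee_fin sumr_const card_ord /N card_ffun card_option !card_ord.
by rewrite -natrX mulr_natl.
Qed.

Lemma vbound (R : realType) (m : R) (K n : nat) : 0 < m ->
  (n.+1)%:R ^+ K * expR (- m * (n%:R - K%:R)) <=
  (expR (m * K.+1%:R) * (K.+1)`!%:R / m ^+ K.+1) * (n.+1%:R)^-1.
Proof.
move=> mpos.
set N : R := n.+1%:R.
have N0 : 0 < N by rewrite /N ltr0n.
have -> : - m * (n%:R - K%:R) = m * K.+1%:R + - (m * N).
  by rewrite /N -!natr1; ring.
rewrite expRD expRN.
set L := (m * N) ^+ K.+1 / (K.+1)`!%:R.
have L0 : 0 < L by rewrite /L divr_gt0 // ?exprn_gt0 ?mulr_gt0 // ltr0n fact_gt0.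
have LE : L <= expR (m * N).
  have := expR_ge1Dxn K (ltW (mulr_gt0 mpos N0)); rewrite -/L; lra.
have iv : (expR (m * N))^-1 <= L^-1 by rewrite lef_pV2 ?posrE ?expR_gt0.
apply: (@le_trans _ _ (N ^+ K * (expR (m * K.+1%:R) * L^-1))).
  apply: ler_wpM2l; first by rewrite exprn_ge0 // ltW.
  by apply: ler_wpM2l => //; rewrite expR_ge0.
rewrite /L exprMn !exprS.
have fne : (K.+1)`!%:R != 0 :> R by rewrite pnatr_eq0 -lt0n fact_gt0.
have mne : m != 0 by rewrite gt_eqF.
have Nne : N != 0 by rewrite gt_eqF.
rewrite le_eqVlt; apply/orP; left; apply/eqP; field.
have N1 : 1 + n%:R != 0 :> R by rewrite addrC natr1 pnatr_eq0.
by rewrite N1 fne mne !expf_neq0.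
Qed.

Theorem lemma4p6 (R : realType) (d : measure_display) (T : measurableType d)
  (dist : T -> T -> R) (mu : probability T R)
  (P : forall n : nat, probability (n.-tuple T) R) (p r : R) :
  mm_space dist mu -> nontrivial_mm dist mu ->
  1 <= p -> 0 < r ->
  (forall n, is_product_measure mu (P n)) ->
  (fun n : nat => ereal_sup [set P n (dball (lp_dist dist p (n := n)) x r)
                            | x in [set: n.-tuple T]]) @ \oo --> 0%E.
Proof.
move=> [hmet _ _ hm _] hnt p1 r0 hP.
have [eps [m [epos mpos hq]]] := @unif_small _ _ _ dist mu hmet hm hnt.
have [a _] := hnt.
have m1 : m <= 1.
  have := hq a; have : 0 <= fine (mu (dball dist a eps)).
    by rewrite fine_ge0 ?measure_ge0.
  lra.
have ep0 : 0 < eps `^ p by rewrite powR_gt0.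
set K := Num.Def.archi_bound (r `^ p / eps `^ p).
have hK : r `^ p < K%:R * eps `^ p.
  have := @archi_boundP _ (r `^ p / eps `^ p) (divr_ge0 (powR_ge0 _ _) (ltW ep0)).
  by rewrite -/K ltr_pdivrMr.
set C := expR (m * K.+1%:R) * (K.+1)`!%:R / m ^+ K.+1.
apply: (@squeeze_cvge _ _ _ _ (fun=> 0%E) _ (fun n => (C * (n.+1%:R)^-1)%:E)).
- apply: nearW => n; apply/andP; split.
    pose x0 : n.-tuple T := [tuple of nseq n a].
    apply: le_trans (measure_ge0 (P n) (dball (lp_dist dist p (n:=n)) x0 r)) _.
    by apply: ereal_sup_ubound; exists x0.
  apply: ge_ereal_sup => _ [x _ <-].
  apply: le_trans (@ball_bound _ _ _ dist mu n (P n) p r eps m K x hmet hm p1 epos mpos m1 hq hK (hP n)) _.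
  by rewrite lee_fin vbound.
- exact: cvg_cst.
- apply: cvg_EFin; first exact: nearW.
  have := @cvgMl_tmp _ _ _ _ _ C _ (@cvg_harmonic R); rewrite mulr0.
  by move=> h; exact: (h _).
Qed.
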